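(* Let $m,n\ge 1$ and let $x_1,\dots,x_m\in\{0,1\}^n$ be arbitrary input vectors. Run the Triangular Basis Algorithm (described in the context) on these inputs, and for each $i\in\{1,\dots,n\}$ define \[\beta_i = 0^{i-1}\,\Vert\,\overline{av_i}\,\Vert\, b_i[(i+1)..n]\in\{0,1\}^n,\] where $av_i$ and $b_i[(i+1)..n]$ are the values at the end of the algorithm and $\overline{av_i}=1\oplus av_i$. Then the $\mathbb{F}_2$-linear span of the original input vectors $x_1,\dots,x_m$ equals the $\mathbb{F}_2$-linear span of $\beta_1,\dots,\beta_n$.
   Context: All arithmetic is over $\mathbb{F}_2$ ($+$ is XOR, $\wedge$ is AND). For a vector $v\in\{0,1\}^n$, $v[i]$ is its $i$-th bit and $v[a..b]$ the substring of bits $a$ through $b$ (empty if $a>b$); $\Vert$ is concatenation. Triangular Basis Algorithm. Input: $x_1,\dots,x_m\in\{0,1\}^n$ (modified in place). Auxiliary variables: bits $\mathrm{used}_j$ ($1\le j\le m$) initialized to $0$; bits $av_i$ ($1\le i\le n$) initialized to $1$; strings $b_i[(i+1)..n]$ ($1\le i\le n$) initialized to all zeros. The algorithm executes, for $i=1,\dots,n$ (outer loop) and, inside it, for $j=1,\dots,m$ (inner loop), the following four steps in order (iteration $(i,j)$): (1) $\mathrm{used}_j \leftarrow \mathrm{used}_j + (x_j[i]\wedge av_i)$; (2) $av_i\leftarrow av_i + (x_j[i]\wedge \mathrm{used}_j)$ (using the value of $\mathrm{used}_j$ just updated); (3) if $\mathrm{used}_j=1$: $b_i[(i+1)..n]\leftarrow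 b_i[(i+1)..n]+x_j[(i+1)..n]$; (4) if $x_j[i]=1$: $x_j[(i+1)..n]\leftarrow x_j[(i+1)..n]+b_i[(i+1)..n]$. *)

(* Defs.v *)
(* Vectors in {0,1}^n are functions 'I_n -> bool (bit i is
   index i, 0-based: paper's bit i+1); spans are taken as row spaces of
   matrices over the field 'F_2. *)
From HB Require Import structures.
From mathcomp Require Import all_boot all_order all_algebra.
Set Implicit Arguments. Unset Strict Implicit. Unset Printing Implicit Defensive.

Section TBA.
Variables m n : nat.

Record tba_state := TBAState {
  st_x    : 'I_m -> 'I_n -> bool;
  st_used : 'I_m -> bool;
  st_av   : 'I_n -> bool;
  st_b    : 'I_n -> 'I_n -> bool   (* b_i[k], only meaningful for k > i *)
}.

Definition tba_init (x : 'I_m -> 'I_n -> bool) : tba_state :=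
  TBAState x (fun _ => false) (fun _ => true) (fun _ _ => false).

Definition tba_step (i : 'I_n) (j : 'I_m) (s : tba_state) : tba_state :=
  let xji := st_x s j i in
  let u := addb (st_used s j) (xji && st_av s i) in
  let used' := fun j' => if j' == j then u else st_used s j' in
  let a := addb (st_av s i) (xji && u) in
  let av' := fun i' => if i' == i then a else st_av s i' in
  let bi := fun k : 'I_n =>
      if u && (i < k)%N then addb (st_b s i k) (st_x s j k) else st_b s i k in
  let b' := fun i' k => if i' == i then bi k else st_b s i' k in
  let xj := fun k : 'I_n =>
      if xji && (i < k)%N then addb (st_x s j k) (bi k) else st_x s j k in
  let x' := fun j' k => if j' == j then xj k else st_x s j' k in
  TBAState x' used' av' b'.

Definition tba_run (x : 'I_m -> 'I_n -> bool) : tba_state :=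
  foldl (fun s i => foldl (fun s' j => tba_step i j s') s (enum 'I_m))
        (tba_init x) (enum 'I_n).

Definition tba_beta (x : 'I_m -> 'I_n -> bool) (i k : 'I_n) : bool :=
  let s := tba_run x in
  if (k < i)%N then false
  else if k == i then ~~ st_av s i
  else st_b s i k.

Definition input_mx (x : 'I_m -> 'I_n -> bool) : 'M['F_2]_(m, n) :=
  \matrix_(j < m, k < n) ((x j k)%:R)%R.

Definition beta_mx (x : 'I_m -> 'I_n -> bool) : 'M['F_2]_(n, n) :=
  \matrix_(i < n, k < n) ((tba_beta x i k)%:R)%R.

End TBA.

(* Main.v *)
Require Import Defs.
From HB Require Import structures.
From mathcomp Require Import all_boot all_order all_algebra.

Set Implicit Arguments. Unset Strict Implicit. Unset Printing Implicit Defensive.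
Import GRing.Theory.

Section Proof.
Local Open Scope ring_scope.
Variables m n : nat.
Variable x0 : 'I_m -> 'I_n -> bool.

Lemma F2 (a b : bool) : ((a (+) b)%:R : 'F_2) = a%:R + b%:R.
Proof. case: a; case: b => //=; rewrite ?add0r ?addr0 //. by apply: val_inj. Qed.

Definition rowv (f : 'I_n -> bool) : 'rV['F_2]_n := \row_k ((f k)%:R).

Lemma rowv_ext f g : (forall k, f k = g k) -> rowv f = rowv g.
Proof. by move=> H; apply/rowP => k; rewrite !mxE H. Qed.

Lemma rowvD f g h : (forall k, f k = g k (+) h k) -> rowv f = rowv g + rowv h.
Proof. by move=> H; apply/rowP => k; rewrite !mxE H F2. Qed.

Lemma rowv0 f : (forall k, f k = false) -> rowv f = 0.
Proof. by move=> H; apply/rowP => k; rewrite !mxE H. Qed.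

Definition betaS (s : tba_state m n) (p k : 'I_n) : bool :=
  if (k < p)%N then false else if k == p then ~~ st_av s p else st_b s p k.

Definition betaM s : 'M['F_2]_(n, n) := \matrix_(p, k) ((betaS s p k)%:R).

Lemma row_betaM s p : row p (betaM s) = rowv (betaS s p).
Proof. by apply/rowP => k; rewrite !mxE. Qed.

Lemma row_input j : row j (input_mx x0) = rowv (x0 j).
Proof. by apply/rowP => k; rewrite !mxE. Qed.

Definition cut (i : nat) (D : seq 'I_m) (j : 'I_m) := (i + (j \in D))%N.

Definition Inv (i : nat) (D : seq 'I_m) (s : tba_state m n) :=
  [/\ forall j (k : 'I_n), st_used s j -> (cut i D j <= k)%N -> st_x s j k = false,
      forall j, (rowv (fun k : 'I_n => x0 j k (+) ((cut i D j <= k)%N && st_x s j k))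
                   <= betaM s)%MS,
      (betaM s <= input_mx x0)%MS &
      forall (p k : 'I_n), (i <= p)%N -> st_av s p -> st_b s p k = false].

Lemma sub_rows (A B : 'M['F_2]_(n, n)) :
  (forall p, row p A = row p B \/ row p A = 0) -> (A <= B)%MS.
Proof.
move=> H; apply/row_subP => p; case: (H p) => ->; [exact: row_sub | exact: sub0mx].
Qed.

Lemma step_inv (i : 'I_n) D j s :
  Inv i D s -> j \notin D -> Inv i (rcons D j) (tba_step i j s).
Proof.
case=> I1 I2 I3 I4 jD.
have cutj : cut i D j = i by rewrite /cut (negbTE jD) addn0.
have cutR j' : cut i (rcons D j) j' = (cut i D j' + (j' == j))%N.
  rewrite /cut mem_rcons in_cons; case: eqP => [->|_] /=; last by rewrite addn0.
  by rewrite (negbTE jD) addn0.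
have xu : st_used s j -> st_x s j i = false by move=> u; apply: I1; rewrite // cutj.
case Hx: (st_x s j i); last first.
-
  have Eu j' : st_used (tba_step i j s) j' = st_used s j'.
    by rewrite /tba_step /=; case: eqP => // ->; rewrite Hx addbF.
  have Ea p : st_av (tba_step i j s) p = st_av s p.
    by rewrite /tba_step /=; case: eqP => // ->; rewrite Hx /= addbF.
  have Eb p k : st_b (tba_step i j s) p k = st_b s p k.
    rewrite /tba_step /=; case: eqP => // ->; rewrite Hx andFb addbF.
    case: ifP => // /andP [u ik]; rewrite I1 ?addbF // cutj ltnW //.
  have Ex j' k : st_x (tba_step i j s) j' k = st_x s j' k.
    by rewrite /tba_step /=; case: eqP => // ->; rewrite Hx.
  have EB : betaM (tba_step i j s) = betaM s.
    by apply/matrixP => p k; rewrite !mxE /betaS Ea Eb.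
  have Ev j' (k : 'I_n) : ((cut i (rcons D j) j' <= k)%N && st_x (tba_step i j s) j' k)
               = ((cut i D j' <= k)%N && st_x s j' k).
    rewrite Ex cutR; case: (j' =P j) => [->|_]; last by rewrite addn0.
    rewrite cutj addn1; case: (ltngtP i k) => [ik|ik|ik] //=.
    by rewrite -(ord_inj ik) Hx.
  split.
  + move=> j' k; rewrite Eu Ex cutR => u h; apply: I1 => //.
    exact: leq_trans (leq_addr _ _) h.
  + move=> j'; rewrite EB; erewrite rowv_ext; first exact: (I2 j'); by move=> k /=; rewrite Ev.
  + by rewrite EB.
  + by move=> p k ip; rewrite Ea Eb; apply: I4.
have uf : st_used s j = false by apply/negP => /xu; rewrite Hx.
case Ha: (st_av s i).
- (* pivot *)
  have b0 k : st_b s i k = false by apply: I4.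
  have Eu j' : st_used (tba_step i j s) j' = (j' == j) || st_used s j'.
    by rewrite /tba_step /=; case: (j' =P j) => [E|_] //; rewrite ?E; rewrite Hx Ha uf.
  have Ea p : st_av (tba_step i j s) p = (p != i) && st_av s p.
    by rewrite /tba_step /=; case: (p =P i) => [E|_] //; rewrite ?E; rewrite Hx Ha uf.
  have Eb p k : st_b (tba_step i j s) p k =
      if p == i then (i < k)%N && st_x s j k else st_b s p k.
    rewrite /tba_step /=; case: (p =P i) => [E|_] //; rewrite ?E.
    by rewrite Hx Ha uf b0 /=; case: ifP.
  have Ex j' k : st_x (tba_step i j s) j' k =
      if j' == j then ~~ (i < k)%N && st_x s j k else st_x s j' k.
    rewrite /tba_step /=; case: (j' =P j) => [E|_] //; rewrite ?E.
    by rewrite Hx Ha uf b0 /=; case: (i < k)%N => /=; rewrite ?addbb.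
  have Br p : p != i -> row p (betaM (tba_step i j s)) = row p (betaM s).
    by move=> pi; rewrite !row_betaM; apply: rowv_ext => k;
       rewrite /betaS Ea Eb (negbTE pi).
  have Bi : row i (betaM (tba_step i j s)) = rowv (fun k => (i <= k)%N && st_x s j k).
    rewrite row_betaM; apply: rowv_ext => k; rewrite /betaS Ea Eb eqxx /=.
    case: (ltngtP k i) => ki //=.
    - by case: eqP => // E; move: ki; rewrite E ltnn.
    - by rewrite (ord_inj ki) eqxx Hx.
  have Bi0 : row i (betaM s) = 0.
    rewrite row_betaM; apply: rowv0 => k; rewrite /betaS Ha b0.
    by case: ifP => //; case: ifP.
  have Mono : (betaM s <= betaM (tba_step i j s))%MS.
    apply: sub_rows => p; case: (p =P i) => [->|/eqP pi]; [by right | left].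
    by rewrite Br.
  have Vj : (rowv (fun k => (i <= k)%N && st_x s j k) <= input_mx x0)%MS.
    rewrite (@rowvD _ (x0 j) (fun k => x0 j k (+) ((cut i D j <= k)%N && st_x s j k))).
      apply: addmx_sub; first by rewrite -row_input row_sub.
      exact: submx_trans (I2 j) I3.
    by move=> k; rewrite cutj addKb.
  split.
  + move=> j' k; rewrite Eu Ex cutR; case: (j' =P j) => [->|_] /=.
      by rewrite cutj addn1 => _ ->.
    by rewrite addn0; apply: I1.
  + move=> j'; case: (j' =P j) => [->|/eqP jj].
      rewrite (@rowvD _ (fun k => x0 j k (+) ((cut i D j <= k)%N && st_x s j k))
                      (fun k => (i <= k)%N && st_x s j k)).
        apply: addmx_sub; first exact: submx_trans (I2 j) Mono.
        by rewrite -Bi row_sub.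
      move=> k; rewrite cutR cutj eqxx addn1 Ex eqxx.
      by case: (i < k)%N; rewrite /= ?andbF ?addbF // -addbA addbb addbF.
    have -> : rowv (fun k => x0 j' k (+) ((cut i (rcons D j) j' <= k)%N
                 && st_x (tba_step i j s) j' k))
        = rowv (fun k => x0 j' k (+) ((cut i D j' <= k)%N && st_x s j' k)).
      by apply: rowv_ext => k; rewrite cutR Ex !(negbTE jj) addn0.
    exact: submx_trans (I2 j') Mono.
  + apply/row_subP => p; case: (p =P i) => [->|/eqP pi]; first by rewrite Bi.
    by rewrite Br //; exact: submx_trans (row_sub p _) I3.
  + move=> p k ip; rewrite Ea Eb => /andP [pi av]; rewrite (negbTE pi); exact: I4.
(* reduce *)
have Eu j' : st_used (tba_step i j s) j' = st_used s j'.
  by rewrite /tba_step /=; case: (j' =P j) => [E|_] //; rewrite ?E Hx Ha uf.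
have Ea p : st_av (tba_step i j s) p = st_av s p.
  by rewrite /tba_step /=; case: (p =P i) => [E|_] //; rewrite ?E Hx Ha uf.
have Eb p k : st_b (tba_step i j s) p k = st_b s p k.
  by rewrite /tba_step /=; case: (p =P i) => [E|_] //; rewrite ?E Hx Ha uf.
have Ex j' k : st_x (tba_step i j s) j' k =
    if j' == j then (if (i < k)%N then st_x s j k (+) st_b s i k else st_x s j k)
    else st_x s j' k.
  by rewrite /tba_step /=; case: (j' =P j) => [E|_] //; rewrite ?E Hx Ha uf.
have EB : betaM (tba_step i j s) = betaM s.
  by apply/matrixP => p k; rewrite !mxE /betaS Ea Eb.
split.
- move=> j' k; rewrite Eu Ex cutR; case: (j' =P j) => [->|_] /=.
    by rewrite uf.
  by rewrite addn0; apply: I1.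
- move=> j'; rewrite EB; case: (j' =P j) => [->|/eqP jj].
    rewrite (@rowvD _ (fun k => x0 j k (+) ((cut i D j <= k)%N && st_x s j k))
                    (betaS s i)).
      by apply: addmx_sub; [exact: I2 | rewrite -row_betaM row_sub].
    move=> k; rewrite cutR cutj eqxx addn1 Ex eqxx /betaS Ha.
    case: (ltngtP k i) => ki //=.
    + by rewrite !addbF.
    + case: eqP => [E|_]; first by move: ki; rewrite E ltnn.
      by rewrite -addbA.
    + by rewrite (ord_inj ki) eqxx Hx -addbA addbb.
  erewrite rowv_ext; first exact: (I2 j').
  by move=> k; rewrite cutR Ex !(negbTE jj) addn0.
- by rewrite EB.
- by move=> p k ip; rewrite Ea Eb; apply: I4.
Qed.

Lemma inner_inv (i : 'I_n) r D s : uniq (D ++ r) -> Inv i D s ->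
  Inv i (D ++ r) (foldl (fun s' j => tba_step i j s') s r).
Proof.
elim: r D s => [|a r IH] D s; first by rewrite cats0.
rewrite -cat_rcons => U H /=; apply: IH => //.
apply: step_inv => //; move: U; rewrite cat_uniq => /and3P [+ _ _].
by rewrite rcons_uniq => /andP [].
Qed.

Lemma col_inv (i : 'I_n) s : Inv i [::] s ->
  Inv i.+1 [::] (foldl (fun s' j => tba_step i j s') s (enum 'I_m)).
Proof.
move=> H; have := inner_inv (r := enum 'I_m) (D := [::]) (enum_uniq _) H.
case=> I1 I2 I3 I4.
have C j : cut i (enum 'I_m) j = cut i.+1 [::] j by rewrite /cut mem_enum addn1 addn0.
split.
- by move=> j k; rewrite -C; apply: I1.
- by move=> j; rewrite -C; apply: I2.
- exact: I3.
- by move=> p k ip; apply: I4; apply: ltnW.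
Qed.

Lemma outer_inv r s (i0 : nat) : map val r = iota i0 (size r) -> Inv i0 [::] s ->
  Inv (i0 + size r) [::]
    (foldl (fun s i => foldl (fun s' j => tba_step i j s') s (enum 'I_m)) s r).
Proof.
elim: r s i0 => [|a r IH] s i0 /=; first by rewrite addn0.
case=> Ea Er H; rewrite addnS -addSn; apply: IH => //.
by rewrite -Ea; apply: col_inv; rewrite Ea.
Qed.

Lemma init_inv : Inv 0 [::] (tba_init x0).
Proof.
split => //.
- move=> j; have -> : rowv (fun k => x0 j k (+) ((cut 0 [::] j <= k)%N
                           && st_x (tba_init x0) j k)) = 0.
    by apply: rowv0 => k; rewrite /cut /= addbb.
  exact: sub0mx.
- have -> : betaM (tba_init x0) = 0.
    by apply/matrixP => p k; rewrite !mxE /betaS /=; case: ifP => //; case: ifP.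
  exact: sub0mx.
Qed.

Lemma final_inv : Inv n [::] (tba_run x0).
Proof.
have := outer_inv (r := enum 'I_n) (i0 := 0) _ init_inv.
by rewrite size_enum_ord add0n val_enum_ord; apply.
Qed.

End Proof.

Theorem mainTheorem1 (m n : nat) (hm : (0 < m)%N) (hn : (0 < n)%N)
    (x : 'I_m -> 'I_n -> bool) :
  (input_mx x == beta_mx x)%MS.
Proof.
have [I1 I2 I3 I4] := final_inv x.
have EB : beta_mx x = betaM (tba_run x) by [].
rewrite EB; apply/andP; split; last exact: I3.
apply/row_subP => j; rewrite row_input.
erewrite rowv_ext; first exact: (I2 j).
by move=> k /=; rewrite /cut /= addn0 leqNgt ltn_ord andFb addbF.
Qed.
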